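(* Let $w\in\{0,1\}^n$ and $b\in\{0,1\}$. Let $F\vdash w$ and $F'\vdash wb$ be the closed forks built by the strategy $\mathcal{A}^*$ (on input $wb$, after processing $w$ and $wb$ respectively), so that $F\sqsubseteq F'$, and suppose in addition that $F$ is canonical. Then $F'$ is canonical.
   Context: Characteristic strings and forks. A characteristic string is $w=w_1\dots w_n\in\{0,1\}^n$; index $i$ is honest if $w_i=0$ and adversarial if $w_i=1$. A fork for $w$ is a rooted tree with edges directed away from the root $r$ and labeling $\ell:V\to\{0,\dots,n\}$ with (F1) $\ell(r)=0$; (F2) labels strictly increasing along directed paths; (F3) each honest index labels exactly one vertex; (F4) for honest $i<j$ the vertex labeled $i$ has strictly smaller depth than the vertex labeled $j$. Write $F\vdash w$. A vertex is honest if it is the root or labeled by an honest index; a tine is a directed path from the root, honest if its last vertex is honest; its length is its number of edges, $\ell(t)$ the label of its last vertex; $\mathrm{height}(F)$ is the maximal tine length. For tines $t_1,t_2$, $t_1\cap t_2$ is their longest common prefix. For $x$ a prefix of $w$, $F\vdash x$, $F'\vdash w$, $F\sqsubseteq F'$ means $F$ is a consistently labeled subgraph of $F'$. A fork is closed if every leaf is honest; a closed fork has a unique longest tine $\hat t$. Reach and relative margin. For closed $F\vdash w$ and tine $t$: $\mathrm{gap}(t)=\mathrm{length}(\hat t)-\mathrm{length}(t)$, $\mathrm{reserve}(t)=|\{i:w_i=1,\ i>\ell(t)\}|$, $\mathrm{reach}(t)=\mathrm{reserve}(t)-\mathrm{gap}(t)$; $\rho(F)=\max_t\mathrm{reach}(t)$,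 $\rho(w)=\max\{\rho(F):F\vdash w\text{ closed}\}$. For $w=xy$, tines are disjoint over $y$ if they share no edge terminating at a vertex with label $>|x|$ (a tine may be paired with itself). $\mu_x(F)=\max\min\{\mathrm{reach}(t_1),\mathrm{reach}(t_2)\}$ over pairs disjoint over $y$, and $\mu_x(y)=\max\{\mu_x(F):F\vdash xy\text{ closed}\}$. A pair $(t_\rho,t_x)$ of tines of $F\vdash xy$ witnesses $\mu_x(F)$ if they are disjoint over $y$, $\mathrm{reach}(t_\rho)=\rho(F)$ and $\mathrm{reach}(t_x)=\mu_x(F)$. Canonical forks. The trivial fork (single root vertex) is canonical for the empty string. For $n\ge1$, a fork $F_n$ for $w=w_1\dots w_n$ is canonical if it is closed, $F_{n-1}\sqsubseteq F_n$ for a canonical fork $F_{n-1}$ for $w_1\dots w_{n-1}$, $F_n$ contains an honest tine $\tau_\rho$ with $\mathrm{reach}(\tau_\rho)=\rho(F_n)=\rho(w)$, and for every decomposition $w=xy$ with $x$ a strict prefix of $w$, $F_n$ contains two honest tines $\tau_{\rho x},\tau_x$ such that $(\tau_{\rho x},\tau_x)$ witnesses $\mu_x(F_n)$ and $\mu_x(F_n)=\mu_x(y)$. Conservative extension. For closed $F\vdash w$ and a tine $s$ of $F$, a conservative extension of $s$ is a closed fork $F'\vdash w0$ with $F\sqsubseteq F'$ obtained by adding to $F$ a new honest tine $\sigma$ with $\ell(\sigma)=|w|+1$, $s$ a prefix of $\sigma$, and $\mathrm{length}(\sigma)=\mathrm{height}(F)+1$ (the new vertices between $s$ and the final vertex are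 labeled by adversarial indices). Strategy $\mathcal{A}^*$. Let $\le_\pi$ be the lexicographic order on tines, each represented by the list of its vertex labels from the root (ties broken arbitrarily but consistently). On input $w_1w_2\dots$, $F_0$ is the trivial fork. Given $F_n\vdash w_1\dots w_n$: if $w_{n+1}=1$, set $F_{n+1}=F_n$; if $w_{n+1}=0$, $F_{n+1}$ is a conservative extension of a tine $s\in F_n$ chosen as follows: if $F_n$ has no tine of reach $0$, $s$ is the unique longest tine of $F_n$; otherwise $s$ is the reach-zero tine that diverges earliest from the set of maximal-reach tines of $F_n$ (i.e., minimizes $\ell(s\cap r)$ over maximal-reach tines $r$), ties broken by smallest $\le_\pi$-rank. *)

(* Defs.v *)
From mathcomp Require Import all_boot all_order all_algebra.
Set Implicit Arguments. Unset Strict Implicit. Unset Printing Implicit Defensive.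
Import Order.TTheory GRing.Theory Num.Theory.

(* Characteristic strings: w : seq bool, w_i (1 <= i <= size w) is          *)
(* nth false w i.-1 ; true = 1 = adversarial, false = 0 = honest.           *)
Definition wbit (w : seq bool) (i : nat) : bool := nth false w i.-1.
Definition honest_idx (w : seq bool) (i : nat) : bool :=
  (0 < i <= size w) && ~~ wbit w i.
Definition adv_idx (w : seq bool) (i : nat) : bool :=
  (0 < i <= size w) && wbit w i.

(* A labelled rooted tree: vertices are 0, ..., nv-1, the root is 0, every  *)
(* vertex v >= 1 has parent par v < v (edges are directed away from the     *)
(* root), lab v is the label of v. Values of par/lab outside the vertex set *)
(* (and par 0) are irrelevant junk.                                         *)
Record fork := Fork { nv : nat; par : nat -> nat; lab : nat -> nat }.

Definition trivial_fork : fork := Fork 1 (fun _ => 0) (fun _ => 0).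

Fixpoint depth_aux (p : nat -> nat) (fuel v : nat) : nat :=
  match fuel with
  | 0 => 0
  | fuel'.+1 => if v == 0 then 0 else (depth_aux p fuel' (p v)).+1
  end.

(* depth of v = length (number of edges) of the tine ending at v *)
Definition depth (F : fork) (v : nat) : nat := depth_aux (par F) v v.

Definition path_up (F : fork) (v : nat) : seq nat :=
  [seq iter k (par F) v | k <- iota 0 (depth F v).+1].

Definition anc (F : fork) (u v : nat) : bool := u \in path_up F v.

(* last vertex of the longest common prefix t_u \cap t_v *)
Definition lca (F : fork) (u v : nat) : nat :=
  nth 0 [seq x <- path_up F u | anc F x v] 0.

Definition tine_labels (F : fork) (v : nat) : seq nat :=
  rev (map (lab F) (path_up F v)).

Definition height (F : fork) : nat := \max_(v < nv F) depth F v.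

Definition valid_fork (w : seq bool) (F : fork) : Prop :=
  [/\ 0 < nv F,
      lab F 0 = 0,
      (forall v, 0 < v < nv F ->
         [/\ par F v < v, lab F (par F v) < lab F v & lab F v <= size w]),
      (forall i, honest_idx w i ->
         count (fun v => lab F v == i) (iota 0 (nv F)) = 1)
    & (forall u v, u < nv F -> v < nv F ->
         honest_idx w (lab F u) -> honest_idx w (lab F v) ->
         lab F u < lab F v -> depth F u < depth F v)].

Definition honest_vertex (w : seq bool) (F : fork) (v : nat) : bool :=
  (v == 0) || honest_idx w (lab F v).

Definition closed (w : seq bool) (F : fork) : Prop :=
  forall v, v < nv F ->
    (forall u, 0 < u < nv F -> par F u <> v) -> honest_vertex w F v.

Definition subfork (G F : fork) : Prop :=
  exists f : nat -> nat,
    [/\ f 0 = 0,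
        (forall v, v < nv G -> f v < nv F),
        (forall u v, u < nv G -> v < nv G -> f u = f v -> u = v),
        (forall v, v < nv G -> lab F (f v) = lab G v)
      & (forall v, 0 < v < nv G -> par F (f v) = f (par G v))].

Definition gap (F : fork) (t : nat) : nat := height F - depth F t.

Definition reserve (w : seq bool) (F : fork) (t : nat) : nat :=
  count (fun i => wbit w i) (iota (lab F t).+1 (size w - lab F t)).

Definition reach (w : seq bool) (F : fork) (t : nat) : int :=
  (reserve w F t)%:Z - (gap F t)%:Z.

Definition rhoF (w : seq bool) (F : fork) : int :=
  \big[Order.max/reach w F 0]_(v < nv F) reach w F v.

Definition is_rho (w : seq bool) (r : int) : Prop :=
  (exists G, [/\ valid_fork w G, closed w G & rhoF w G = r]) /\
  (forall G, valid_fork w G -> closed w G -> (rhoF w G <= r)%R).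

(* tines u, v are disjoint over y, where w = xy and k = |x| *)
Definition disjoint_over (F : fork) (k : nat) (u v : nat) : bool :=
  all (fun x => (x == 0) || (lab F x <= k)) [seq x <- path_up F u | anc F x v].

(* mu_x(F), with k = |x| (the pair (root,root) is always disjoint over y) *)
Definition muF (w : seq bool) (k : nat) (F : fork) : int :=
  \big[Order.max/reach w F 0]_(u < nv F)
    \big[Order.max/reach w F 0]_(v < nv F | disjoint_over F k u v)
       Order.min (reach w F u) (reach w F v).

Definition is_mu (w : seq bool) (k : nat) (r : int) : Prop :=
  (exists G, [/\ valid_fork w G, closed w G & muF w k G = r]) /\
  (forall G, valid_fork w G -> closed w G -> (muF w k G <= r)%R).

Fixpoint canon (w : seq bool) (n : nat) (F : fork) : Prop :=
  match n with
  | 0 => valid_fork [::] F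
  | m.+1 =>
    let x := take n w in
    [/\ valid_fork x F /\ closed x F,
        (exists G, canon w m G /\ subfork G F),
        (exists t, [/\ t < nv F, honest_vertex x F t & reach x F t = rhoF x F]),
        is_rho x (rhoF x F)
      & (forall k, k < n ->
          exists t1 t2,
            t1 < nv F /\ t2 < nv F /\
            honest_vertex x F t1 /\ honest_vertex x F t2 /\
            disjoint_over F k t1 t2 /\
            reach x F t1 = rhoF x F /\
            reach x F t2 = muF x k F /\
            is_mu x k (muF x k F))]
  end.

Definition canonical (w : seq bool) (F : fork) : Prop := canon w (size w) F.

Definition cons_ext (w : seq bool) (F : fork) (s : nat) (F' : fork) : Prop :=
  exists m : nat,
    nv F' = nv F + m.+1 /\
    (forall v, v < nv F -> lab F' v = lab F v) /\
    (forall v, 0 < v < nv F -> par F' v = par F v) /\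
    par F' (nv F) = s /\
    (forall j, 0 < j <= m -> par F' (nv F + j) = (nv F + j).-1) /\
    (forall j, j < m -> adv_idx w (lab F' (nv F + j))) /\
    lab F' (nv F + m) = (size w).+1 /\
    depth F' (nv F + m) = (height F).+1 /\
    valid_fork (rcons w false) F' /\
    closed (rcons w false) F'.

Fixpoint lex_le (s t : seq nat) : bool :=
  match s, t with
  | [::], _ => true
  | _ :: _, [::] => false
  | a :: s', b :: t' => (a < b) || ((a == b) && lex_le s' t')
  end.

Definition diverge (w : seq bool) (F : fork) (s : nat) : nat :=
  \big[minn/size w]_(r < nv F | reach w F r == rhoF w F) lab F (lca F s r).

Definition astar_select (w : seq bool) (F : fork) (s : nat) : Prop :=
  if has (fun v => reach w F v == 0%R) (iota 0 (nv F)) then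
    [/\ reach w F s = 0%R,
        (forall s', s' < nv F -> reach w F s' = 0%R -> diverge w F s <= diverge w F s')
      & (forall s', s' < nv F -> reach w F s' = 0%R ->
           diverge w F s' = diverge w F s -> lex_le (tine_labels F s) (tine_labels F s'))]
  else depth F s = height F.

Definition astar_step (w : seq bool) (F : fork) (b : bool) (F' : fork) : Prop :=
  if b then F' = F
  else exists s, [/\ s < nv F, astar_select w F s & cons_ext w F s F'].

Inductive astar_run : seq bool -> fork -> Prop :=
| astar_run0 : astar_run [::] trivial_fork
| astar_runS w F b F' :
    astar_run w F -> astar_step w F b F' -> astar_run (rcons w b) F'.

(* Main.v *)
Require Import Defs.
From mathcomp Require Import all_boot all_order all_algebra zify.
Set Implicit Arguments. Unset Strict Implicit. Unset Printing Implicit Defensive.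
Import Order.TTheory GRing.Theory Num.Theory.
Notation closed := Defs.closed.

Definition wf (F : fork) := 0 < nv F /\ forall v, 0 < v < nv F -> par F v < v.

Lemma depth_aux_fuel (p : nat -> nat) N :
  (forall x, 0 < x < N -> p x < x) ->
  forall fuel fuel' v, v < N -> v <= fuel -> v <= fuel' ->
  depth_aux p fuel v = depth_aux p fuel' v.
Proof.
move=> Hp; elim=> [|f IH] [|f'] v vN h1 h2 /=.
- by [].
- by move: h1; rewrite leqn0 => /eqP ->.
- by move: h2; rewrite leqn0 => /eqP ->.
case: eqP => // /eqP v0; congr S; apply: IH.
- have := Hp v; lia.
- have := Hp v; lia.
- have := Hp v; lia.
Qed.

Lemma depth0 F : depth F 0 = 0. Proof. by []. Qed.

Lemma depthE F v : wf F -> 0 < v < nv F -> depth F v = (depth F (par F v)).+1.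
Proof.
move=> [_ Hw] Hv; rewrite /depth.
case: v Hv => [|v] Hv //=.
have Hlt := Hw _ Hv.
congr S; apply: (@depth_aux_fuel _ (nv F)); first (move=> x hx; exact: Hw); lia.
Qed.

Lemma path_up0 F : path_up F 0 = [:: 0].
Proof. by []. Qed.

Lemma map_iter_iota (f : nat -> nat) v n :
  [seq iter k f v | k <- iota 0 n.+1] = v :: [seq iter k f (f v) | k <- iota 0 n].
Proof.
rewrite /= -[iota 1 n]/(iota (1 + 0) n) iotaDl -map_comp; congr cons.
by apply: eq_map => k /=; rewrite add0n -iterS iterSr.
Qed.

Lemma path_upE F v : wf F -> 0 < v < nv F -> path_up F v = v :: path_up F (par F v).
Proof.
by move=> Hw Hv; rewrite /path_up (depthE Hw Hv) map_iter_iota.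
Qed.

Section Paths.
Variable F : fork.
Hypothesis Hwf : wf F.
Hypothesis Hlab : forall v, 0 < v < nv F -> lab F (par F v) < lab F v.

Lemma pu_self v : v \in path_up F v.
Proof. by rewrite /path_up /= inE eqxx. Qed.

Lemma pu_0 x : x \in path_up F 0 -> x = 0.
Proof. by rewrite path_up0 mem_seq1 => /eqP. Qed.

Lemma pu_step v x : 0 < v < nv F -> x \in path_up F v -> x = v \/ x \in path_up F (par F v).
Proof. move=> Hv H; rewrite (path_upE Hwf Hv) in_cons in H; case/orP: H => [/eqP|]; auto. Qed.

Lemma pu_stepI v x : 0 < v < nv F -> x \in path_up F (par F v) -> x \in path_up F v.
Proof. by move=> Hv H; rewrite (path_upE Hwf Hv) in_cons H orbT. Qed.

Lemma parlt v : 0 < v < nv F -> par F v < v.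
Proof. exact: Hwf.2. Qed.

Lemma pu_lt v : v < nv F -> forall x, x \in path_up F v -> x < nv F.
Proof.
elim/ltn_ind: v => v IH Hv x Hx.
case: (posnP v) => [E|H0]; first by move: Hx; rewrite E => /pu_0 ->; exact: Hwf.1.
have Hv' : 0 < v < nv F by rewrite H0.
have Hp := parlt Hv'; case: (pu_step Hv' Hx) => [->//|]; apply: (IH _ Hp); lia.
Qed.

Lemma pu_root v : v < nv F -> 0 \in path_up F v.
Proof.
elim/ltn_ind: v => v IH Hv.
case: (posnP v) => [->|H0]; first exact: pu_self.
have Hv' : 0 < v < nv F by rewrite H0.
have Hp := parlt Hv'; apply: pu_stepI => //; apply: (IH _ Hp); lia.
Qed.

Lemma pu_trans v a x : v < nv F -> a \in path_up F v -> x \in path_up F a -> x \in path_up F v.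
Proof.
elim/ltn_ind: v a x => v IH a x Hv Ha Hx.
case: (posnP v) => [E|H0]; first by move: Ha; rewrite E => /pu_0 E'; subst.
have Hv' : 0 < v < nv F by rewrite H0.
case: (pu_step Hv' Ha) => [E|Ha']; first by rewrite -E.
apply: pu_stepI => //; have Hp := parlt Hv'; apply: (IH _ Hp a) => //; lia.
Qed.

Lemma pu_depth v x : v < nv F -> x \in path_up F v -> x != v -> depth F x < depth F v.
Proof.
elim/ltn_ind: v x => v IH x Hv Hx Hne.
case: (posnP v) => [E|H0]; first by move: Hx Hne; rewrite E => /pu_0 ->.
have Hv' : 0 < v < nv F by rewrite H0.
rewrite (depthE Hwf Hv'); case: (pu_step Hv' Hx) => [E|Hx']; first by rewrite E eqxx in Hne.
case: (x =P par F v) => [->//|/eqP Hne'].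
have Hp := parlt Hv'; apply: ltn_trans (IH _ Hp _ _ Hx' Hne') _ => //; lia.
Qed.

Lemma pu_depth_le v x : v < nv F -> x \in path_up F v -> depth F x <= depth F v.
Proof.
move=> Hv Hx; case: (x =P v) => [->//|/eqP Hne]; exact/ltnW/pu_depth.
Qed.

Lemma pu_lab v x : v < nv F -> x \in path_up F v -> x != v -> lab F x < lab F v.
Proof.
elim/ltn_ind: v x => v IH x Hv Hx Hne.
case: (posnP v) => [E|H0]; first by move: Hx Hne; rewrite E => /pu_0 ->.
have Hv' : 0 < v < nv F by rewrite H0.
have Hl := Hlab Hv'.
case: (pu_step Hv' Hx) => [E|Hx']; first by rewrite E eqxx in Hne.
case: (x =P par F v) => [->//|/eqP Hne'].
have Hp := parlt Hv'; apply: ltn_trans (IH _ Hp _ _ Hx' Hne') _ => //; lia.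
Qed.

Lemma pu_lab_le v x : v < nv F -> x \in path_up F v -> lab F x <= lab F v.
Proof.
move=> Hv Hx; case: (x =P v) => [->//|/eqP Hne]; exact/ltnW/pu_lab.
Qed.

Lemma pu_child v a : v < nv F -> a \in path_up F v -> a != v ->
  exists c, [/\ c \in path_up F v, 0 < c < nv F & par F c = a].
Proof.
elim/ltn_ind: v a => v IH a Hv Ha Hne.
case: (posnP v) => [E|H0]; first by move: Ha Hne; rewrite E => /pu_0 ->.
have Hv' : 0 < v < nv F by rewrite H0.
case: (pu_step Hv' Ha) => [E|Ha']; first by rewrite E eqxx in Hne.
case: (a =P par F v) => [->|/eqP Hne'].
  by exists v; split => //; exact: pu_self.
have Hp := parlt Hv'.
have Hpv : par F v < nv F by lia.
have [c [Hc1 Hc2 Hc3]] := IH _ Hp a Hpv Ha' Hne'.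
by exists c; split => //; apply: pu_stepI.
Qed.

Lemma pu_chain v x y : v < nv F -> x \in path_up F v -> y \in path_up F v ->
  x \in path_up F y \/ y \in path_up F x.
Proof.
elim/ltn_ind: v x y => v IH x y Hv Hx Hy.
case: (posnP v) => [E|H0].
  by move: Hx Hy; rewrite E => /pu_0 -> /pu_0 ->; left; exact: pu_self.
have Hv' : 0 < v < nv F by rewrite H0.
case: (pu_step Hv' Hx) => [Ex|Hx']; first by right; rewrite Ex.
case: (pu_step Hv' Hy) => [Ey|Hy']; first by left; rewrite Ey.
have Hp := parlt Hv'; apply: (IH _ Hp) => //; lia.
Qed.

End Paths.

Definition R (w : seq bool) (l : nat) : nat := count (wbit w) (iota l.+1 (size w - l)).

Lemma reserveE w F t : reserve w F t = R w (lab F t). Proof. by []. Qed.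

Lemma R_split w l1 l2 : l1 <= l2 <= size w ->
  R w l1 = count (wbit w) (iota l1.+1 (l2 - l1)) + R w l2.
Proof.
move=> H; rewrite /R.
have -> : size w - l1 = (l2 - l1) + (size w - l2) by lia.
by rewrite iotaD count_cat; congr (_ + count _ (iota _ _)); lia.
Qed.

Lemma R_step w l1 l2 : l1 < l2 <= size w -> wbit w l2 -> R w l2 < R w l1.
Proof.
move=> H Hb; rewrite (@R_split w l1 l2); last lia.
have : 0 < count (wbit w) (iota l1.+1 (l2 - l1)).
  rewrite -has_count; apply/hasP; exists l2 => //; rewrite mem_iota; lia.
lia.
Qed.

Lemma R_top w : R w (size w) = 0.
Proof. by rewrite /R subnn. Qed.

Lemma wbit_rcons w b i : 0 < i <= size w -> wbit (rcons w b) i = wbit w i.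
Proof. by move=> H; rewrite /wbit nth_rcons; case: ifP => //; lia. Qed.

Lemma wbit_rcons_top w b : wbit (rcons w b) (size w).+1 = b.
Proof. by rewrite /wbit nth_rcons /= ltnn eqxx. Qed.

Lemma R_rcons w b l : l <= size w -> R (rcons w b) l = R w l + b.
Proof.
move=> H; rewrite /R size_rcons.
have -> : (size w).+1 - l = (size w - l) + 1 by lia.
rewrite iotaD count_cat /=.
have -> : l.+1 + (size w - l) = (size w).+1 by lia.
rewrite wbit_rcons_top addn0; congr (_ + _).
apply: eq_in_count => i; rewrite mem_iota => Hi; apply: wbit_rcons; lia.
Qed.

Lemma honest_rcons w b i : i <= size w -> honest_idx (rcons w b) i = honest_idx w i.
Proof.
move=> H; rewrite /honest_idx size_rcons.
case: (posnP i) => [->//|Hi]; rewrite wbit_rcons; last lia.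
by rewrite /= H (leqW H).
Qed.

Lemma honest_rcons_top w b : honest_idx (rcons w b) (size w).+1 = ~~ b.
Proof. by rewrite /honest_idx size_rcons wbit_rcons_top leqnn. Qed.

Lemma height_ge F v : v < nv F -> depth F v <= height F.
Proof. by move=> Hv; rewrite /height (leq_bigmax (Ordinal Hv)). Qed.

Lemma height_le F c : (forall v, v < nv F -> depth F v <= c) -> height F <= c.
Proof. by move=> H; apply/bigmax_leqP => i _; apply: H. Qed.

Lemma height_att F : 0 < nv F -> exists2 v, v < nv F & depth F v = height F.
Proof.
move=> H; have [i Hi] := bigop.eq_bigmax (fun i : 'I_(nv F) => depth F i)
  ltac:(by rewrite card_ord).
by exists i => //; rewrite /height Hi.
Qed.

Local Open Scope ring_scope.

Lemma reachE w F t : reach w F t = (R w (lab F t))%:Z - (height F - depth F t)%:Z.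
Proof. by []. Qed.

Lemma rhoF_ge w F v : (v < nv F)%N -> reach w F v <= rhoF w F.
Proof. by move=> Hv; rewrite /rhoF (le_bigmax_cond _ (j := Ordinal Hv)). Qed.

Lemma rhoF_le w F c : (0 < nv F)%N -> (forall v, (v < nv F)%N -> reach w F v <= c) -> rhoF w F <= c.
Proof.
move=> H0 H; apply/bigmax_leP; split; first exact: H.
by move=> i _; apply: H.
Qed.

Lemma rhoF_att w F : (0 < nv F)%N -> exists2 v, (v < nv F)%N & reach w F v = rhoF w F.
Proof.
move=> H0; rewrite /rhoF.
apply: (big_ind (fun y => exists2 v, (v < nv F)%N & reach w F v = y)).
- by exists 0.
- move=> x y [a Ha <-] [b Hb <-].
  by case: (leP (reach w F a) (reach w F b)) => _; [exists b|exists a].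
- by move=> i _; exists i.
Qed.

Lemma muF_ge w k F u v : (u < nv F)%N -> (v < nv F)%N -> disjoint_over F k u v ->
  Order.min (reach w F u) (reach w F v) <= muF w k F.
Proof.
move=> Hu Hv Hd; rewrite /muF.
apply: le_trans (le_bigmax_cond _ (j := Ordinal Hu) _ isT).
by rewrite (le_bigmax_cond _ (j := Ordinal Hv) _ Hd).
Qed.

Lemma muF_le w k F c : (0 < nv F)%N -> reach w F 0 <= c ->
  (forall u v, (u < nv F)%N -> (v < nv F)%N -> disjoint_over F k u v ->
     Order.min (reach w F u) (reach w F v) <= c) -> muF w k F <= c.
Proof.
move=> H0 Hc H; apply/bigmax_leP; split => // i _.
apply/bigmax_leP; split => // j Hj; exact: H.
Qed.

Lemma muF_le_rho w k F : (0 < nv F)%N -> muF w k F <= rhoF w F.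
Proof.
move=> H0; apply: muF_le => //; first exact: rhoF_ge.
move=> u v Hu _ _; rewrite ge_min; apply/orP; left; exact: rhoF_ge.
Qed.

Close Scope ring_scope.

Lemma bigminn_le (n : nat) (P : pred 'I_n) (G : 'I_n -> nat) x0 j :
  P j -> \big[minn/x0]_(i < n | P i) G i <= G j.
Proof.
move=> Pj.
have H : forall r, j \in r -> \big[minn/x0]_(i <- r | P i) G i <= G j.
  elim=> [//|a r IH]; rewrite in_cons big_cons => /orP [/eqP <-|Hr].
    by rewrite Pj geq_minl.
  case: (P a); last exact: IH.
  by apply: leq_trans (geq_minr _ _) (IH Hr).
exact: (H (index_enum _) (mem_index_enum j)).
Qed.

Lemma bigminn_lt (n : nat) (P : pred 'I_n) (G : 'I_n -> nat) x0 c :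
  c < x0 -> \big[minn/x0]_(i < n | P i) G i <= c -> exists2 j, P j & G j <= c.
Proof.
move=> Hc Hb.
case: (boolP [exists j, P j && (G j <= c)]) => [/existsP [j /andP [Pj Gj]]|/existsPn Hn].
  by exists j.
suff : c < \big[minn/x0]_(i < n | P i) G i by rewrite ltnNge Hb.
apply: (big_ind (fun y => c < y)) => //.
  by move=> x y Hx Hy; rewrite leq_min Hx Hy.
move=> i Pi; have := Hn i; rewrite Pi /= -ltnNge; done.
Qed.

Lemma vf_wf w G : valid_fork w G -> wf G.
Proof. by case=> H0 _ H2 _ _; split => // v Hv; case: (H2 v Hv). Qed.

Lemma vf_lab w G : valid_fork w G -> forall v, 0 < v < nv G -> lab G (par G v) < lab G v.
Proof. by case=> H0 _ H2 _ _ v Hv; case: (H2 v Hv). Qed.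

Lemma vf_labw w G : valid_fork w G -> forall v, 0 < v < nv G -> 0 < lab G v <= size w.
Proof. by case=> H0 _ H2 _ _ v Hv; case: (H2 v Hv) => _ H1 ->; rewrite andbT; lia. Qed.

Lemma vf_lab_le w G : valid_fork w G -> forall v, v < nv G -> lab G v <= size w.
Proof.
move=> H v Hv; case: (posnP v) => [->|H0]; first by case: H => _ ->.
by case/andP: (vf_labw H (v := v) ltac:(lia)).
Qed.

Section VF.
Variables (w : seq bool) (G : fork).
Hypothesis HG : valid_fork w G.
Let Hwf := vf_wf HG.
Let Hlab := vf_lab HG.

Lemma lab0 : lab G 0 = 0. Proof. by case: HG. Qed.

Lemma walk (P : nat -> bool) : P 0 -> forall v, v < nv G ->
  (forall x, x \in path_up G v -> ~~ P x -> wbit w (lab G x)) ->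
  exists a, [/\ a \in path_up G v, P a & R w (lab G v) + depth G v <= R w (lab G a) + depth G a].
Proof.
move=> P0; elim/ltn_ind => v IH Hv Hx.
case: (boolP (P v)) => Pv; first by exists v; split => //; exact: pu_self.
have H0 : 0 < v by case: (posnP v) Pv => [->|]; rewrite ?P0.
have Hv' : 0 < v < nv G by rewrite H0.
have Hp := parlt Hwf Hv'.
have [||a [Ha1 Ha2 Ha3]] := IH (par G v) Hp.
- lia.
- by move=> x Hxp; apply: Hx; apply: pu_stepI.
exists a; split => //; first exact: pu_stepI.
have Hl := Hlab Hv'; have Hw := vf_labw HG Hv'.
have Hs := @R_step w (lab G (par G v)) (lab G v) ltac:(lia) (Hx v (pu_self _ _) Pv).
rewrite (depthE Hwf Hv'); lia.
Qed.

Local Open Scope ring_scope.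
Lemma reach_mono v a : (v < nv G)%N -> (a < nv G)%N ->
  (R w (lab G v) + depth G v <= R w (lab G a) + depth G a)%N -> reach w G v <= reach w G a.
Proof.
move=> Hv Ha H; rewrite !reachE.
have := height_ge Hv; have := height_ge Ha; lia.
Qed.
Close Scope ring_scope.

Lemma honest_anc v : v < nv G -> exists h,
  [/\ h \in path_up G v, honest_vertex w G h & (reach w G v <= reach w G h)%R].
Proof.
move=> Hv.
have [||a [Ha1 Ha2 Ha3]] := @walk (honest_vertex w G) _ v Hv.
- by rewrite /honest_vertex eqxx.
- move=> x Hx; rewrite /honest_vertex negb_or => /andP [Hx0 Hh].
  have Hxn := pu_lt Hwf Hv Hx.
  have Hw := vf_labw HG (v := x) ltac:(lia); move: Hh; rewrite /honest_idx Hw /=.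
  by rewrite negbK.
exists a; split => //.
have Han : a < nv G by apply: (pu_lt Hwf Hv Ha1).
exact: reach_mono.
Qed.

Lemma lcaE u v : 0 < u < nv G -> lca G u v = if u \in path_up G v then u else lca G (par G u) v.
Proof.
move=> Hu; rewrite /lca (path_upE Hwf Hu) /=.
by rewrite /anc; case: ifP.
Qed.

Lemma lca_common u v : u < nv G -> v < nv G ->
  lca G u v \in path_up G u /\ lca G u v \in path_up G v.
Proof.
elim/ltn_ind: u => u IH Hu Hv.
case: (posnP u) => [->|H0].
  have -> : lca G 0 v = 0 by rewrite /lca path_up0 /=; case: ifP.
  split; [exact: pu_self | exact: pu_root].
have Hu' : 0 < u < nv G by rewrite H0.
rewrite lcaE //; case: ifP => Huv; first by split => //; exact: pu_self.
have Hp := parlt Hwf Hu'.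
have [||H1 H2] := IH _ Hp; [lia|done|].
by split => //; apply: pu_stepI.
Qed.

Lemma lca_max u v x : u < nv G -> x \in path_up G u -> x \in path_up G v ->
  lab G x <= lab G (lca G u v).
Proof.
elim/ltn_ind: u x => u IH x Hu Hxu Hxv.
case: (posnP u) => [E|H0]; first by move: Hxu; rewrite E => /pu_0 ->; rewrite lab0.
have Hu' : 0 < u < nv G by rewrite H0.
rewrite lcaE //; case: ifP => Huv; first exact: (pu_lab_le Hwf Hlab Hu Hxu).
have Hp := parlt Hwf Hu'.
case: (pu_step Hwf Hu' Hxu) => [E|Hx']; first by rewrite -E Hxv in Huv.
apply: IH => //; lia.
Qed.

Lemma disjointP k u v :
  reflect (forall x, x \in path_up G u -> x \in path_up G v -> lab G x <= k)
          (disjoint_over G k u v).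
Proof.
apply: (iffP allP) => H.
  move=> x Hu Hv; have := H x; rewrite mem_filter /anc Hu Hv => /(_ isT).
  by case/orP => [/eqP ->|//]; rewrite lab0.
by move=> x; rewrite mem_filter /anc => /andP [Hv Hu]; rewrite H ?orbT.
Qed.

End VF.

Section Restrict.
Variable G : fork.
Hypothesis Hwf : wf G.
Variable K : nat -> bool.
Hypothesis K0 : K 0.
Hypothesis Kpar : forall v, 0 < v < nv G -> K v -> K (par G v).

Definition ks := [seq v <- iota 0 (nv G) | K v].
Definition G0 := Fork (size ks) (fun i => index (par G (nth 0 ks i)) ks) (fun i => lab G (nth 0 ks i)).
Definition fk i := nth 0 ks i.

Lemma ks_mem v : (v \in ks) = (v < nv G) && K v.
Proof. by rewrite mem_filter mem_iota add0n andbC. Qed.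

Lemma ks_sorted : sorted ltn ks.
Proof. apply: sorted_filter; [exact: ltn_trans | exact: iota_ltn_sorted]. Qed.

Lemma ks_uniq : uniq ks.
Proof. exact: filter_uniq (iota_uniq _ _). Qed.

Lemma ks_head : 0 < size ks /\ fk 0 = 0.
Proof.
rewrite /fk /ks; case: (nv G) Hwf.1 => [//|n] _ /=; rewrite K0 /=; done.
Qed.

Lemma fk_in i : i < size ks -> fk i \in ks.
Proof. exact: mem_nth. Qed.

Lemma fk_nv i : i < size ks -> fk i < nv G.
Proof. by move/fk_in; rewrite ks_mem => /andP []. Qed.

Lemma fk_K i : i < size ks -> K (fk i).
Proof. by move/fk_in; rewrite ks_mem => /andP []. Qed.

Lemma g_fk i : i < size ks -> index (fk i) ks = i.
Proof. move=> Hi; exact: index_uniq Hi ks_uniq. Qed.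

Lemma fk_g v : v \in ks -> fk (index v ks) = v.
Proof. exact: nth_index. Qed.

Lemma fk_mono i j : i < j -> j < size ks -> fk i < fk j.
Proof.
move=> Hij Hj; have := @sorted_ltn_nth _ ltn ltn_trans 0 ks ks_sorted i j.
rewrite !inE; apply => //; lia.
Qed.

Lemma fk_inj i j : i < size ks -> j < size ks -> fk i = fk j -> i = j.
Proof. by move=> Hi Hj E; rewrite -(g_fk Hi) -(g_fk Hj) E. Qed.

Lemma fk_pos i : 0 < i < size ks -> 0 < fk i.
Proof. case/andP => H0 Hi; have := fk_mono H0 Hi; rewrite ks_head.2; done. Qed.

Lemma par0E i : 0 < i < size ks -> fk (par G0 i) = par G (fk i).
Proof.
move=> Hi; rewrite /= fk_g // ks_mem.
have Hn : 0 < fk i < nv G by rewrite fk_pos // fk_nv //; lia.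
have Hfn : fk i < nv G by apply: fk_nv; lia.
by rewrite (pu_lt Hwf Hfn (pu_stepI Hwf Hn (pu_self _ _))) /= Kpar // fk_K //; lia.
Qed.

Lemma par0_size i : 0 < i < size ks -> par G0 i < size ks.
Proof.
move=> Hi; rewrite /= index_mem ks_mem.
have Hn : 0 < fk i < nv G by rewrite fk_pos // fk_nv //; lia.
have Hfn : fk i < nv G by apply: fk_nv; lia.
by rewrite (pu_lt Hwf Hfn (pu_stepI Hwf Hn (pu_self _ _))) /= Kpar // fk_K //; lia.
Qed.

Lemma wf_G0 : wf G0.
Proof.
split; first exact: ks_head.1.
move=> i Hi; have {}Hi : 0 < i < size ks := Hi.
have Hs := par0_size Hi; have E := par0E Hi.
have Hn : 0 < fk i < nv G by rewrite fk_pos // fk_nv //; lia.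
have Hp := parlt Hwf Hn.
rewrite -E in Hp.
case: (ltngtP (par G0 i) i) => // H.
- by have := fk_mono H Hs; lia.
- by rewrite H in Hp; lia.
Qed.

Lemma depth0E i : i < size ks -> depth G0 i = depth G (fk i).
Proof.
elim/ltn_ind: i => i IH Hi.
case: (posnP i) => [->|H0]; first by rewrite ks_head.2.
have Hi' : 0 < i < size ks by rewrite H0.
have Hn : 0 < fk i < nv G by rewrite fk_pos // fk_nv //; lia.
rewrite (depthE wf_G0 Hi') (depthE Hwf Hn) -par0E // IH //.
- exact: (parlt wf_G0 Hi').
- exact: par0_size.
Qed.

Lemma path0E i : i < size ks -> map fk (path_up G0 i) = path_up G (fk i).
Proof.
elim/ltn_ind: i => i IH Hi.
case: (posnP i) => [->|H0]; first by rewrite ks_head.2 !path_up0 /= ks_head.2.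
have Hi' : 0 < i < size ks by rewrite H0.
have Hn : 0 < fk i < nv G by rewrite fk_pos // fk_nv //; lia.
rewrite (path_upE wf_G0 Hi') (path_upE Hwf Hn).
rewrite -[map fk (_ :: _)]/(fk i :: map fk (path_up G0 (par G0 i))).
rewrite -par0E // IH //.
- exact: (parlt wf_G0 Hi').
- exact: par0_size.
Qed.

Lemma pu0_map i x : i < size ks -> x \in path_up G0 i -> fk x \in path_up G (fk i).
Proof. by move=> Hi Hx; rewrite -path0E // map_f. Qed.

End Restrict.

Lemma count1_uniq (P : pred nat) N x y : count P (iota 0 N) = 1 ->
  x < N -> y < N -> P x -> P y -> x = y.
Proof.
move=> Hc Hx Hy Px Py; apply/eqP; apply: contraT => Hne.
have : size [:: x; y] <= size [seq z <- iota 0 N | P z].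
  apply: uniq_leq_size; first by rewrite /= inE Hne.
  move=> z; rewrite !inE mem_filter mem_iota => /orP [/eqP ->|/eqP ->]; rewrite ?Px ?Py /=; lia.
by rewrite size_filter Hc.
Qed.

Lemma count1_ex (P : pred nat) N : count P (iota 0 N) = 1 -> exists2 x, x < N & P x.
Proof.
move=> Hc; have : has P (iota 0 N) by rewrite has_count Hc.
by case/hasP => x; rewrite mem_iota => Hx Px; exists x.
Qed.

Section Delete.
Variable w : seq bool.
Let n := size w.
Let w0 := rcons w false.
Variable G : fork.
Hypothesis HG : valid_fork w0 G.
Hypothesis HGc : closed w0 G.
Let Hwf := vf_wf HG.
Let Hlab := vf_lab HG.

Lemma sz_w0 : size w0 = n.+1. Proof. by rewrite /w0 size_rcons. Qed.

Lemma u_ex : exists2 u, u < nv G & lab G u = n.+1.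
Proof.
case: HG => _ _ _ H3 _.
have := H3 n.+1; rewrite /w0 /n honest_rcons_top => /(_ isT) /count1_ex [u Hu /eqP E].
by exists u.
Qed.

Variable u : nat.
Hypothesis Hu : u < nv G.
Hypothesis Hlu : lab G u = n.+1.

Lemma u_uniq x : x < nv G -> lab G x = n.+1 -> x = u.
Proof.
case: HG => _ _ _ H3 _ Hx Hlx.
have := H3 n.+1; rewrite /w0 /n honest_rcons_top => /(_ isT) Hc.
by apply: (count1_uniq Hc) => //; rewrite ?Hlx ?Hlu.
Qed.

Lemma u_pos : 0 < u.
Proof. case: (posnP u) Hlu => [->|//]; by rewrite (lab0 HG). Qed.

Lemma u_not_anc t x : t < nv G -> x \in path_up G t -> x != t -> x != u.
Proof.
move=> Ht Hx Hne; apply/eqP => E.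
have := pu_lab Hwf Hlab Ht Hx Hne; rewrite E Hlu.
have := vf_lab_le HG Ht; rewrite sz_w0; lia.
Qed.

Definition Kp v := has (fun x => (v \in path_up G x) && ((x == 0) || honest_idx w (lab G x))) (iota 0 (nv G)).

Lemma Kp0 : Kp 0.
Proof. apply/hasP; exists 0; rewrite ?mem_iota ?pu_self ?eqxx //=; exact: Hwf.1. Qed.

Lemma KpP v : reflect (exists x, [/\ x < nv G, v \in path_up G x & (x == 0) || honest_idx w (lab G x)]) (Kp v).
Proof.
apply: (iffP hasP) => [[x]|[x [H1 H2 H3]]].
  by rewrite mem_iota => /andP [_ H1] /andP [H2 H3]; exists x.
by exists x; rewrite ?mem_iota ?H2 ?H3.
Qed.

Lemma Kp_par v : 0 < v < nv G -> Kp v -> Kp (par G v).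
Proof.
move=> Hv /KpP [x [H1 H2 H3]]; apply/KpP; exists x; split => //.
apply: (pu_trans Hwf H1 H2); apply: pu_stepI => //; exact: pu_self.
Qed.

Lemma Kp_lab v : v < nv G -> Kp v -> lab G v <= n.
Proof.
move=> Hv /KpP [x [H1 H2 /orP [/eqP E|H3]]].
  by move: H2; rewrite E => /pu_0 ->; rewrite (lab0 HG).
apply: leq_trans (pu_lab_le Hwf Hlab H1 H2) _.
by case/andP: H3 => /andP [].
Qed.

Lemma Kp_depth v : v < nv G -> Kp v -> depth G v < depth G u.
Proof.
move=> Hv /KpP [x [H1 H2 /orP [/eqP E|H3]]].
  move: H2; rewrite E => /pu_0 ->; rewrite depth0.
  by rewrite (depthE Hwf) // u_pos.
apply: leq_ltn_trans (pu_depth_le Hwf H1 H2) _.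
case: HG => _ _ _ _ H4; apply: H4 => //.
- rewrite /w0 honest_rcons //; by case/andP: H3 => /andP [].
- by rewrite Hlu /w0 honest_rcons_top.
- rewrite Hlu; case/andP: H3 => /andP [] _ H5 _; lia.
Qed.

Lemma nonK_adv v : v < nv G -> ~~ Kp v -> v != u -> v != 0 /\ wbit w0 (lab G v).
Proof.
move=> Hv HK Hne.
have Hv0 : v != 0 by apply: contraNneq HK => ->; exact: Kp0.
split => //.
have Hl : 0 < lab G v <= n.+1 by have := vf_labw HG (v := v); rewrite sz_w0; apply; lia.
apply: contraNT HK => Hb; apply/KpP; exists v; split => //; first exact: pu_self.
apply/orP; right.
have Hle : lab G v <= n.
  case: (ltngtP (lab G v) n.+1) => //; [lia | move=> E; by rewrite (u_uniq Hv E) eqxx in Hne].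
rewrite /honest_idx Hle andbT; move: Hb; rewrite /w0 wbit_rcons ?Hle; [|lia].
by case/andP: Hl => -> _.
Qed.

Local Notation G0' := (G0 G Kp).
Local Notation ks' := (ks G Kp).
Local Notation fk' := (fk G Kp).

Lemma fk_Kp i : i < size ks' -> Kp (fk' i).
Proof. exact: fk_K. Qed.
Lemma fk_nv' i : i < size ks' -> fk' i < nv G.
Proof. exact: fk_nv. Qed.

Lemma G0_valid : valid_fork w G0'.
Proof.
have Hk := ks_head Hwf Kp0.
split.
- exact: Hk.1.
- by rewrite /G0 /= -/(fk G Kp 0) Hk.2 (lab0 HG).
- move=> i Hi; have Hi' : 0 < i < size ks' := Hi.
  have Hw0 := wf_G0 Hwf Kp0 Kp_par.
  split; first exact: Hw0.2.
    rewrite /G0 /= -/(fk G Kp _) -/(fk G Kp _).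
    have -> : fk G Kp (index (par G (fk G Kp i)) (ks G Kp)) = par G (fk G Kp i).
      exact: (par0E Hwf Kp0 Kp_par Hi').
    apply: Hlab; rewrite (fk_pos Hwf Kp0) // fk_nv //; lia.
  apply: Kp_lab; [apply: fk_nv; lia | apply: fk_K; lia].
- move=> i Hi.
  have E1 : count (fun v => lab G0' v == i) (iota 0 (size ks')) = count (fun v => lab G v == i) ks'.
    by rewrite -[in RHS](mkseq_nth 0 ks') /mkseq count_map.
  rewrite [nv _]/= E1.
  rewrite /ks count_filter.
  case: HG => _ _ _ H3 _.
  have Hin : i <= n by case/andP: Hi => /andP [].
  rewrite -(H3 i); last by rewrite /w0 honest_rcons.
  apply: eq_in_count => v; rewrite mem_iota add0n => /andP [_ Hv] /=.
  case: (lab G v =P i) => //= E; apply/KpP; exists v; split => //; first exact: pu_self.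
  by rewrite E Hi orbT.
- move=> a b Ha Hb Hha Hhb Hab.
  have Ha' : a < size ks' := Ha.
  have Hb' : b < size ks' := Hb.
  rewrite !(depth0E Hwf Kp0 Kp_par) //.
  case: HG => _ _ _ _ H4; apply: H4; try exact: fk_nv.
  + rewrite /w0 honest_rcons //; by case/andP: Hha => /andP [].
  + rewrite /w0 honest_rcons //; by case/andP: Hhb => /andP [].
  + exact: Hab.
Qed.

Lemma G0_closed : closed w G0'.
Proof.
move=> i Hi Hnc; have Hi' : i < size ks' := Hi.
have Hfi := fk_nv Hi'.
have [x [H1 H2 H3]] := KpP _ (fk_K Hi').
case: (fk G Kp i =P x) => [E|/eqP Hne].
  rewrite /honest_vertex; case/orP: H3 => [/eqP Ex|Hh].
    apply/orP; left; apply/eqP; apply: (@fk_inj G Kp) => //; first exact: (ks_head Hwf Kp0).1.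
    by rewrite (ks_head Hwf Kp0).2 E Ex.
  by apply/orP; right; rewrite /G0 /= -/(fk G Kp i) E.
have [c [Hc1 Hc2 Hc3]] := pu_child Hwf H1 H2 Hne.
have HcK : Kp c by apply/KpP; exists x.
have Hcin : c \in ks G Kp by rewrite ks_mem; case/andP: Hc2 => _ ->.
exfalso; apply: (Hnc (index c (ks G Kp))).
  rewrite /G0 /= index_mem Hcin andbT lt0n; apply/eqP => E0.
  have := fk_g Hcin; rewrite E0 (ks_head Hwf Kp0).2 => Ec.
  by move: Hc2; rewrite -Ec.
rewrite /G0 /= -/(fk G Kp (index c (ks G Kp))) fk_g // Hc3.
exact: g_fk.
Qed.

Local Open Scope ring_scope.

Lemma height0_lt : (height G0' < depth G u)%N.
Proof.
have Hk := ks_head Hwf Kp0.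
have : (height G0' <= (depth G u).-1)%N.
  apply: height_le => i Hi; rewrite (depth0E Hwf Kp0 Kp_par) //.
  have := Kp_depth (fk_nv Hi) (fk_K Hi); lia.
have := Kp_depth (Hwf.1) Kp0; lia.
Qed.

Lemma reach_u : reach w0 G u <= 0.
Proof. by rewrite reachE Hlu -sz_w0 R_top; lia. Qed.

Lemma reach_proj t : (t < nv G)%N -> t != u -> exists a,
  [/\ (a < size ks')%N, fk' a \in path_up G t & reach w0 G t <= reach w G0' a - 1].
Proof.
move=> Ht Htu.
have [|a [Ha1 Ha2 Ha3]] := @walk w0 G HG Kp Kp0 t Ht.
  move=> x Hx HK; case: (x =P t) => [E|/eqP Hne].
    by rewrite E in HK *; case: (nonK_adv Ht HK Htu).
  have Hxn := pu_lt Hwf Ht Hx.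
  by case: (nonK_adv Hxn HK (u_not_anc Ht Hx Hne)).
have Han := pu_lt Hwf Ht Ha1.
have Hain : a \in ks' by rewrite ks_mem Han.
exists (index a ks'); split.
- by rewrite index_mem.
- by rewrite fk_g.
have Hr := reach_mono Ht Han Ha3.
apply: le_trans Hr _.
have Hi : (index a ks' < size ks')%N by rewrite index_mem.
have El : lab G0' (index a ks') = lab G a by rewrite [lab _ _]/= -/(fk G Kp _) fk_g.
rewrite !reachE El (depth0E Hwf Kp0 Kp_par) // fk_g //.
rewrite /w0 R_rcons ?Kp_lab //.
have := height0_lt; have := height_ge Hu; have := height_ge Han.
have := height_ge (F := G0') Hi; rewrite (depth0E Hwf Kp0 Kp_par) // fk_g //.
lia.
Qed.

Lemma proj_u : exists b, [/\ (b < size ks')%N, fk' b \in path_up G u & 0 <= reach w G0' b].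
Proof.
have Hu' : (0 < u < nv G)%N by rewrite u_pos Hu.
have Hp := parlt Hwf Hu'; have Hpn : (par G u < nv G)%N by lia.
have [|a [Ha1 Ha2 Ha3]] := @walk w0 G HG Kp Kp0 (par G u) Hpn.
  move=> x Hx HK; have Hxn := pu_lt Hwf Hpn Hx.
  suff Hne : x != u by case: (nonK_adv Hxn HK Hne).
  apply/eqP => E.
  have := pu_lab_le Hwf Hlab Hpn Hx; rewrite E Hlu.
  have := Hlab Hu'; rewrite Hlu; have := vf_lab_le HG Hpn; lia.
have Han := pu_lt Hwf Hpn Ha1.
have Hain : a \in ks' by rewrite ks_mem Han.
have Hi : (index a ks' < size ks')%N by rewrite index_mem.
exists (index a ks'); split => //.
  by rewrite fk_g //; apply: pu_stepI.
have El : lab G0' (index a ks') = lab G a by rewrite [lab _ _]/= -/(fk G Kp _) fk_g.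
rewrite !reachE El (depth0E Hwf Kp0 Kp_par) // fk_g //.
have Hlp : (lab G (par G u) <= n)%N by have := Hlab Hu'; rewrite Hlu; lia.
move: Ha3; rewrite /w0 (R_rcons _ Hlp) (R_rcons _ (Kp_lab Han Ha2)).
have := height0_lt; rewrite (depthE Hwf Hu').
have := height_ge (F := G0') Hi; rewrite (depth0E Hwf Kp0 Kp_par) // fk_g //.
lia.
Qed.

Lemma disj_proj k t1 t2 a1 a2 : (t1 < nv G)%N -> (t2 < nv G)%N ->
  disjoint_over G k t1 t2 -> (a1 < size ks')%N -> (a2 < size ks')%N ->
  fk' a1 \in path_up G t1 -> fk' a2 \in path_up G t2 -> disjoint_over G0' k a1 a2.
Proof.
move=> Ht1 Ht2 /(disjointP HG) Hd Ha1 Ha2 Hp1 Hp2; apply/(disjointP G0_valid) => x Hx1 Hx2.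
rewrite /G0 /= -/(fk G Kp _); apply: Hd.
- exact: (pu_trans Hwf Ht1 Hp1 (pu0_map Hwf Kp0 Kp_par Ha1 Hx1)).
- exact: (pu_trans Hwf Ht2 Hp2 (pu0_map Hwf Kp0 Kp_par Ha2 Hx2)).
Qed.

Lemma disj_sym (H : fork) wx k a b : valid_fork wx H -> disjoint_over H k a b -> disjoint_over H k b a.
Proof.
move=> HH /(disjointP HH) Hd; apply/(disjointP HH) => x H1 H2; exact: Hd.
Qed.

Lemma not_disj_uu k : (k < n.+1)%N -> ~~ disjoint_over G k u u.
Proof.
move=> Hk; apply/negP => /(disjointP HG) /(_ u (pu_self _ _) (pu_self _ _)).
rewrite Hlu; lia.
Qed.

Variable rho : int.
Hypothesis HR : forall H, valid_fork w H -> closed w H -> rhoF w H <= rho.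

Lemma reach_nonu t : (t < nv G)%N -> t != u -> reach w0 G t <= rho - 1.
Proof.
move=> Ht Htu; have [a [Ha1 Ha2 Ha3]] := reach_proj Ht Htu.
apply: le_trans Ha3 _; rewrite lerD2r.
apply: le_trans (HR G0_valid G0_closed); exact: rhoF_ge.
Qed.

Lemma UB_rho : rhoF w0 G <= Order.max (rho - 1) 0.
Proof.
apply: rhoF_le; first exact: Hwf.1.
move=> v Hv; rewrite le_max; apply/orP.
case: (v =P u) => [->|/eqP Hne]; first by right; exact: reach_u.
by left; apply: reach_nonu.
Qed.

Lemma UB_mun : muF w0 n G <= rho - 1.
Proof.
have H : forall t1 t2, (t1 < nv G)%N -> (t2 < nv G)%N -> disjoint_over G n t1 t2 ->
   Order.min (reach w0 G t1) (reach w0 G t2) <= rho - 1.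
  move=> t1 t2 H1 H2 Hd; rewrite ge_min; apply/orP.
  case: (t1 =P u) => [E1|/eqP N1]; last by left; apply: reach_nonu.
  case: (t2 =P u) => [E2|/eqP N2]; last by right; apply: reach_nonu.
  by rewrite E1 E2 in Hd; move: (not_disj_uu (ltnSn n)); rewrite Hd.
apply: muF_le => //; first exact: Hwf.1.
  have := H 0 0 Hwf.1 Hwf.1; rewrite minxx; apply.
  by apply/(disjointP HG) => x /pu_0 ->; rewrite (lab0 HG).
Qed.

Variables (k : nat) (mu : int).
Hypothesis Hk : (k < n)%N.
Hypothesis HM : forall H, valid_fork w H -> closed w H -> muF w k H <= mu.

Definition Uk := if (mu == 0) && (mu < rho) then 0 else mu - 1.

Lemma Uk_ge : mu - 1 <= Uk.
Proof. rewrite /Uk; case: ifP => // /andP [/eqP -> _]; done. Qed.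

Lemma pair_tu t : (t < nv G)%N -> t != u -> disjoint_over G k t u ->
  Order.min (reach w0 G t) (reach w0 G u) <= Uk.
Proof.
move=> Ht Htu Hd.
have [a [Ha1 Ha2 Ha3]] := reach_proj Ht Htu.
have [b [Hb1 Hb2 Hb3]] := proj_u.
have Hab := disj_proj Ht Hu Hd Ha1 Hb1 Ha2 Hb2.
have Hm' : Order.min (reach w G0' a) (reach w G0' b) <= mu.
  by apply: le_trans _ (HM G0_valid G0_closed); apply: muF_ge.
have Hr : reach w G0' a <= rho by apply: le_trans (HR G0_valid G0_closed); exact: rhoF_ge.
have Hu0 := reach_u.
move: Hm'; rewrite ge_min => /orP Hm2.
rewrite ge_min; apply/orP; rewrite /Uk.
case: ifP => [_|/negbT]; first by right.
rewrite negb_and -leNgt; case/orP => [Hmu|Hmr].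
  case: (lerP 1 mu) => Hm1; first by right; lia.
  have Hmu' : mu < 0 by move: Hmu; rewrite -(eqr_opp); lia.
  by left; case: Hm2; lia.
case: (lerP 1 mu) => Hm1; first by right; lia.
by left; lia.
Qed.

Lemma UB_mu : muF w0 k G <= Uk.
Proof.
have H : forall t1 t2, (t1 < nv G)%N -> (t2 < nv G)%N -> disjoint_over G k t1 t2 ->
   Order.min (reach w0 G t1) (reach w0 G t2) <= Uk.
  move=> t1 t2 H1 H2 Hd.
  case: (t1 =P u) => [E1|/eqP N1]; case: (t2 =P u) => [E2|/eqP N2].
  - by rewrite E1 E2 in Hd; move: (@not_disj_uu k ltac:(lia)); rewrite Hd.
  - rewrite E1 minC; apply: pair_tu => //; apply: (disj_sym HG); by rewrite -E1.
  - by rewrite E2; apply: pair_tu => //; rewrite -E2.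
  have [a1 [Ha1 Ha2 Ha3]] := reach_proj H1 N1.
  have [a2 [Hb1 Hb2 Hb3]] := reach_proj H2 N2.
  have Hab := disj_proj H1 H2 Hd Ha1 Hb1 Ha2 Hb2.
  have Hm : Order.min (reach w G0' a1) (reach w G0' a2) <= mu.
    by apply: le_trans _ (HM G0_valid G0_closed); apply: muF_ge.
  have HU := Uk_ge.
  move: Hm; rewrite !ge_min => /orP [Hm|Hm]; apply/orP; [left|right]; lia.
apply: muF_le => //; first exact: Hwf.1.
  have := H 0 0 Hwf.1 Hwf.1; rewrite minxx; apply.
  by apply/(disjointP HG) => x /pu_0 ->; rewrite (lab0 HG).
Qed.

End Delete.

Lemma canon_take n : forall w w' F, take n w = take n w' -> canon w n F -> canon w' n F.
Proof.
elim: n => [//|m IH] w w' F E /=.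
rewrite -E; case=> H1 [G [HG1 HG2]] H3 H4 H5; split => //.
exists G; split => //; apply: (IH w) => //.
by rewrite -(take_takel _ (leqnSn m)) E take_takel.
Qed.

Lemma nil_fork G : valid_fork [::] G -> nv G = 1.
Proof.
move=> HG; case: (ltngtP (nv G) 1) => // H.
  by case: HG => H0 _ _ _ _; lia.
have Hv : (0 < 1 < nv G)%N by [].
have := vf_labw HG Hv; rewrite /=; lia.
Qed.

Lemma nil_reach0 G : valid_fork [::] G -> rhoF [::] G = reach [::] G 0.
Proof.
move=> HG; have E := nil_fork HG.
by rewrite /rhoF E big_ord_recl big_ord0 /= maxxx.
Qed.

Lemma nil_rho G : valid_fork [::] G -> rhoF [::] G = 0%R.
Proof.
move=> HG; have E := nil_fork HG.
have Hh : height G = 0 by apply/eqP; rewrite -leqn0; apply: height_le => v; rewrite E; case: v.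
rewrite /rhoF E big_ord_recl big_ord0 /=.
by rewrite maxxx reachE Hh depth0 (lab0 HG).
Qed.

Local Open Scope ring_scope.

Lemma canon_info w F : canonical w F ->
  [/\ valid_fork w F, closed w F,
      exists2 t, (t < nv F)%N & honest_vertex w F t && (reach w F t == rhoF w F),
      forall G, valid_fork w G -> closed w G -> rhoF w G <= rhoF w F
    & forall k, (k < size w)%N -> exists t1 t2,
        [/\ (t1 < nv F)%N /\ (t2 < nv F)%N, honest_vertex w F t1 && honest_vertex w F t2,
            disjoint_over F k t1 t2, reach w F t1 = rhoF w F /\ reach w F t2 = muF w k F
          & forall G, valid_fork w G -> closed w G -> muF w k G <= muF w k F]].
Proof.
rewrite /canonical; case Es : (size w) => [|m].
  move: Es => /size0nil -> /= HF; have E := nil_fork HF.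
  split => //.
  - by move=> v; rewrite E; case: v => // _ _; rewrite /honest_vertex eqxx.
  - by exists 0; rewrite ?E // /honest_vertex eqxx (nil_reach0 HF) eqxx.
  - by move=> G HG _; rewrite (nil_rho HG) (nil_rho HF).
rewrite /= -Es take_size; case=> [[H1 H2] _ [t [Ht1 Ht2 Ht3]] [_ HR] HM].
split => //.
- by exists t => //; rewrite Ht2 Ht3 eqxx.
- move=> k Hk; have [t1 [t2 [A [B [C [D [G [H [I [_ J]]]]]]]]]] := HM k Hk.
  exists t1, t2; split => //; by rewrite ?C ?D.
Qed.

Lemma honest_vertex_rcons w b H v : (lab H v <= size w)%N ->
  honest_vertex (rcons w b) H v = honest_vertex w H v.
Proof. by move=> Hl; rewrite /honest_vertex honest_rcons. Qed.

Lemma reach_rcons w b H v : (lab H v <= size w)%N ->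
  reach (rcons w b) H v = reach w H v + (b : nat)%:Z.
Proof. by move=> Hl; rewrite !reachE R_rcons // PoszD addrAC. Qed.

Lemma vf_up w H : valid_fork w H -> valid_fork (rcons w true) H.
Proof.
move=> HH; have Hle := vf_lab_le HH.
case: HH => H0 H1 H2 H3 H4; split => //.
- move=> v Hv; case: (H2 v Hv) => A B C; split => //; rewrite size_rcons; lia.
- move=> i; case: (leqP i (size w)) => Hi.
    by rewrite honest_rcons // => /H3.
  rewrite /honest_idx size_rcons => /andP [/andP [_ Hi2] Hb].
  have Ei : i = (size w).+1 by lia.
  by move: Hb; rewrite Ei wbit_rcons_top.
- move=> a b Ha Hb; rewrite !honest_rcons ?Hle //; exact: H4.
Qed.

Lemma closed_up w b H : valid_fork w H -> closed w H -> closed (rcons w b) H.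
Proof.
move=> HH Hc v Hv Hn; rewrite honest_vertex_rcons; last (by apply: (vf_lab_le HH Hv)); exact: Hc.
Qed.

Lemma down_true w H : valid_fork (rcons w true) H -> closed (rcons w true) H ->
  valid_fork w H /\ closed w H.
Proof.
move=> HH Hc.
have Hle : forall v, (v < nv H)%N -> (lab H v <= size w)%N.
  move=> v Hv; have := vf_lab_le HH Hv; rewrite size_rcons leq_eqVlt ltnS.
  case/orP => [/eqP E|//]; exfalso.
  have Hv0 : v != 0 by apply/eqP => E0; move: E; rewrite E0 (lab0 HH).
  suff Hn : forall c, (0 < c < nv H)%N -> par H c <> v.
    by have := Hc v Hv Hn; rewrite /honest_vertex E honest_rcons_top orbF (negbTE Hv0).
  move=> c Hc' Hpc.
  have := vf_lab HH Hc'; rewrite Hpc E; have := vf_lab_le HH (v := c) ltac:(lia).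
  rewrite size_rcons; lia.
have HV : valid_fork w H.
  case: HH => H0 H1 H2 H3 H4; split => //.
  - move=> v Hv; case: (H2 v Hv) => A B _; split => //; apply: Hle; lia.
  - move=> i Hi; apply: H3; rewrite honest_rcons //; by case/andP: Hi => /andP [].
  - move=> a b Ha Hb Hha Hhb; apply: H4; rewrite ?honest_rcons ?Hle //.
split => // v Hv Hn; rewrite -(honest_vertex_rcons true); [exact: Hc | exact: Hle].
Qed.

Local Open Scope ring_scope.

Lemma rho_up w H : valid_fork w H -> rhoF (rcons w true) H = rhoF w H + 1.
Proof.
move=> HH; have Hle := vf_lab_le HH; have H0 : (0 < nv H)%N by case: HH.
apply/eqP; rewrite eq_le; apply/andP; split.
  apply: rhoF_le => // v Hv; rewrite reach_rcons ?Hle // lerD2r; exact: rhoF_ge.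
have [v Hv <-] := rhoF_att w H0.
by rewrite -(reach_rcons true) ?Hle //; exact: rhoF_ge.
Qed.

Lemma mu_up_le w k H c : valid_fork w H -> muF w k H <= c -> muF (rcons w true) k H <= c + 1.
Proof.
move=> HH Hc; have Hle := vf_lab_le HH; have H0 : (0 < nv H)%N by case: HH.
apply: muF_le => //.
  rewrite reach_rcons ?Hle //= lerD2r; apply: le_trans Hc.
  have := @muF_ge w k H 0 0 H0 H0; rewrite minxx; apply.
  by apply/(disjointP HH) => x /pu_0 ->; rewrite (lab0 HH).
move=> a b Ha Hb Hd; rewrite !reach_rcons ?Hle //=.
have := le_trans (muF_ge w Ha Hb Hd) Hc.
by rewrite !ge_min => /orP [A|A]; apply/orP; [left|right]; rewrite lerD2r.
Qed.

Lemma case_true w F : canonical w F -> canonical (rcons w true) F.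
Proof.
move=> HC; have [HV HCl [t Ht /andP [Hth /eqP Htr]] HR HM] := canon_info HC.
have Hle := vf_lab_le HV; have H0 : (0 < nv F)%N by case: HV.
have HV1 := vf_up HV; have HC1 := @closed_up w true F HV HCl.
rewrite /canonical size_rcons /= -[(size w).+1](size_rcons w true) take_size.
have Hrho := rho_up HV.
split => //.
- exists F; split; last first.
    by exists id; split.
  apply: (canon_take (w := w)); last exact: HC.
  by rewrite -cats1 take_size_cat // take_size.
- exists t; split => //; first by rewrite honest_vertex_rcons ?Hle.
  by rewrite reach_rcons ?Hle // Hrho Htr.
- split; first by exists F.
  move=> G HG HGc; have [HG' HGc'] := down_true HG HGc.
  by rewrite rho_up // Hrho lerD2r; apply: HR.
move=> k; rewrite size_rcons ltnS leq_eqVlt => /orP [/eqP Ek|Hk].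
  have Hd : disjoint_over F k t t.
    apply/(disjointP HV) => x Hx _; rewrite Ek; apply: Hle.
    exact: (pu_lt (vf_wf HV) Ht Hx).
  have Hmu : muF (rcons w true) k F = rhoF (rcons w true) F.
    apply/eqP; rewrite eq_le muF_le_rho //=.
    by have := muF_ge (rcons w true) Ht Ht Hd; rewrite minxx reach_rcons ?Hle // Hrho Htr.
  exists t, t; refine (conj Ht (conj Ht (conj _ (conj _ (conj Hd (conj _ (conj _ _))))))).
  + by rewrite honest_vertex_rcons ?Hle.
  + by rewrite honest_vertex_rcons ?Hle.
  + by rewrite reach_rcons ?Hle // Hrho Htr.
  + by rewrite reach_rcons ?Hle // Hmu Hrho Htr.
  + split; first by exists F.
    move=> G HG HGc; rewrite Hmu; apply: le_trans (muF_le_rho _ _ _) _.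
      by case: HG.
    have [HG' HGc'] := down_true HG HGc.
    by rewrite rho_up // Hrho lerD2r; apply: HR.
have [t1 [t2 [[H1 H2] /andP [Hh1 Hh2] Hd [Hr1 Hr2] HMk]]] := HM k Hk.
have Hmr : muF w k F <= rhoF w F by apply: muF_le_rho.
have Hmu : muF (rcons w true) k F = muF w k F + 1.
  apply/eqP; rewrite eq_le mu_up_le //=.
  have := muF_ge (rcons w true) H1 H2 Hd.
  rewrite !reach_rcons ?Hle // Hr1 Hr2 /=.
  by apply: le_trans; rewrite le_min lerD2r Hmr lexx.
exists t1, t2; refine (conj H1 (conj H2 (conj _ (conj _ (conj Hd (conj _ (conj _ _))))))).
- by rewrite honest_vertex_rcons ?Hle.
- by rewrite honest_vertex_rcons ?Hle.
- by rewrite reach_rcons ?Hle // Hr1 Hrho.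
- by rewrite reach_rcons ?Hle // Hr2 Hmu.
- split; first by exists F.
  move=> G HG HGc; have [HG' HGc'] := down_true HG HGc.
  rewrite Hmu; apply: mu_up_le => //; exact: HMk.
Qed.
Close Scope ring_scope.

Section Ext.
Variables (w : seq bool) (F F' : fork) (s m : nat).
Let n := size w.
Let w0 := rcons w false.
Hypothesis HV : valid_fork w F.
Hypothesis Hs : s < nv F.
Hypothesis Hnv : nv F' = nv F + m.+1.
Hypothesis Hlab' : forall v, v < nv F -> lab F' v = lab F v.
Hypothesis Hpar' : forall v, 0 < v < nv F -> par F' v = par F v.
Hypothesis Hps : par F' (nv F) = s.
Hypothesis Hpj : forall j, 0 < j <= m -> par F' (nv F + j) = (nv F + j).-1.
Hypothesis Hlu : lab F' (nv F + m) = n.+1.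
Hypothesis Hdu : depth F' (nv F + m) = (height F).+1.
Hypothesis HV' : valid_fork w0 F'.
Hypothesis HC' : closed w0 F'.

Let Hwf := vf_wf HV.
Let Hwf' := vf_wf HV'.

Lemma ext_path v : v < nv F -> path_up F' v = path_up F v /\ depth F' v = depth F v.
Proof.
elim/ltn_ind: v => v IH Hv.
case: (posnP v) => [->|H0]; first by rewrite !path_up0.
have Hv1 : 0 < v < nv F by rewrite H0.
have Hv2 : 0 < v < nv F' by rewrite H0 Hnv; lia.
have Hp := parlt Hwf Hv1.
have [IH1 IH2] := IH _ Hp ltac:(lia).
rewrite (path_upE Hwf' Hv2) (path_upE Hwf Hv1) (depthE Hwf' Hv2) (depthE Hwf Hv1) Hpar' //.
by rewrite IH1 IH2.
Qed.

Lemma ext_new j : j <= m -> depth F' (nv F + j) = depth F s + j + 1 /\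
  (forall x, x \in path_up F' (nv F + j) -> x < nv F -> x \in path_up F s).
Proof.
elim: j => [|j IH] Hj.
  have Hv : 0 < nv F + 0 < nv F' by rewrite Hnv addn0; have := Hwf.1; lia.
  rewrite (depthE Hwf' Hv) addn0 Hps (ext_path Hs).2; split; first lia.
  move=> x Hx Hxn; rewrite addn0 in Hv Hx; have := pu_step Hwf' Hv Hx; rewrite Hps (ext_path Hs).1.
  by case => // E; rewrite E in Hxn; lia.
have [IH1 IH2] := IH ltac:(lia).
have Hv : 0 < nv F + j.+1 < nv F' by rewrite Hnv; lia.
have Hpj' : par F' (nv F + j.+1) = nv F + j by rewrite Hpj; lia.
rewrite (depthE Hwf' Hv) Hpj' IH1; split; first lia.
move=> x Hx Hxn; have := pu_step Hwf' Hv Hx; rewrite Hpj'.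
case => [E|Hx']; [rewrite E in Hxn; lia | exact: IH2].
Qed.

Lemma ext_height : height F' = (height F).+1.
Proof.
apply/eqP; rewrite eqn_leq; apply/andP; split; last first.
  by rewrite -Hdu; apply: height_ge; rewrite Hnv; lia.
apply: height_le => v; rewrite Hnv => Hv.
case: (ltnP v (nv F)) => Hvn.
  by rewrite (ext_path Hvn).2; apply: leqW; apply: height_ge.
have E : v = nv F + (v - nv F) by lia.
rewrite E (ext_new (j := v - nv F) ltac:(lia)).1.
have := (ext_new (leqnn m)).1; rewrite Hdu; lia.
Qed.

Lemma ext_lab_le v : v < nv F -> lab F v <= n.
Proof. by move=> Hv; have := vf_lab_le HV Hv. Qed.

Lemma ext_reach v : v < nv F -> reach w0 F' v = (reach w F v - 1)%R.
Proof.
move=> Hv; rewrite !reachE Hlab' // /w0 R_rcons ?ext_lab_le // ext_height (ext_path Hv).2.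
have := height_ge Hv; lia.
Qed.

Lemma ext_u_lt : nv F + m < nv F'.
Proof. rewrite Hnv; lia. Qed.

Lemma ext_reach_u : reach w0 F' (nv F + m) = 0%R.
Proof.
rewrite reachE Hlu /w0 -(size_rcons w false) R_top Hdu ext_height; lia.
Qed.

Lemma ext_honest_u : honest_vertex w0 F' (nv F + m).
Proof. by rewrite /honest_vertex Hlu /w0 honest_rcons_top orbT. Qed.

Lemma ext_honest v : v < nv F -> honest_vertex w0 F' v = honest_vertex w F v.
Proof.
move=> Hv; rewrite /honest_vertex Hlab' // /w0 honest_rcons //; exact: ext_lab_le.
Qed.

Lemma ext_disj k a b : a < nv F -> b < nv F -> disjoint_over F' k a b = disjoint_over F k a b.
Proof.
move=> Ha Hb; apply/(disjointP HV')/(disjointP HV) => H x Hxa Hxb.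
  have Hx := pu_lt Hwf Ha Hxa.
  rewrite -Hlab' //; apply: H; rewrite ?(ext_path Ha).1 ?(ext_path Hb).1 //.
have Hx : x < nv F by move: Hxa; rewrite (ext_path Ha).1 => /(pu_lt Hwf Ha).
rewrite Hlab' //; apply: H; rewrite -?(ext_path Ha).1 -?(ext_path Hb).1 //.
Qed.

Lemma ext_disj_u k a : a < nv F ->
  (forall x, x \in path_up F a -> x \in path_up F s -> lab F x <= k) ->
  disjoint_over F' k a (nv F + m).
Proof.
move=> Ha H; apply/(disjointP HV') => x Hxa Hxu.
have Hx : x < nv F by move: Hxa; rewrite (ext_path Ha).1 => /(pu_lt Hwf Ha).
rewrite Hlab' //; apply: H; first by rewrite -(ext_path Ha).1.
exact: (ext_new (leqnn m)).2.
Qed.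

Lemma ext_subfork : subfork F F'.
Proof.
exists id; split; [done | by move=> v Hv; rewrite Hnv; lia | by [] | by move=> v Hv; exact: Hlab' | by move=> v Hv; exact: Hpar'].
Qed.


Hypothesis HC : canonical w F.
Hypothesis Hsel : astar_select w F s.

Lemma ext_diverge k t1 t2 : k < n -> t1 < nv F -> t2 < nv F ->
  reach w F t1 = rhoF w F -> reach w F t2 = 0%R -> disjoint_over F k t1 t2 ->
  reach w F s = 0%R /\ exists h, [/\ h < nv F, honest_vertex w F h, reach w F h = rhoF w F &
    forall x, x \in path_up F h -> x \in path_up F s -> lab F x <= k].
Proof.
move=> Hk H1 H2 Hr1 Hr2 Hd.
have Hhas : has (fun v => reach w F v == 0%R) (iota 0 (nv F)).
  by apply/hasP; exists t2; rewrite ?mem_iota ?Hr2 //.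
move: Hsel; rewrite /astar_select Hhas => -[Hs0 Hdmin _]; split => //.
have Hd1 := Hdmin t2 H2 Hr2.
have Hd2 : diverge w F t2 <= lab F (lca F t2 t1).
  rewrite /diverge; apply: (@bigminn_le (nv F) (fun r : 'I_(nv F) => reach w F r == rhoF w F)
    (fun r : 'I_(nv F) => lab F (lca F t2 r)) (size w) (Ordinal H1)); by rewrite /= Hr1.
have Hd3 : lab F (lca F t2 t1) <= k.
  have [C1 C2] := lca_common HV H2 H1.
  by move/(disjointP HV): Hd; apply.
have [j /eqP Hj Hjk] := @bigminn_lt (nv F) (fun r : 'I_(nv F) => reach w F r == rhoF w F)
    (fun r : 'I_(nv F) => lab F (lca F s r)) (size w) k Hk ltac:(rewrite -/(diverge w F s); lia).
have [h [Hh1 Hh2 Hh3]] := honest_anc HV (ltn_ord j).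
have Hhn := pu_lt Hwf (ltn_ord j) Hh1.
exists h; split => //.
  apply/eqP; rewrite eq_le rhoF_ge //=; by rewrite -Hj.
move=> x Hx1 Hx2; apply: leq_trans Hjk.
apply: (lca_max HV Hs Hx2); exact: (pu_trans Hwf (ltn_ord j) Hh1 Hx1).
Qed.

Lemma ext_sel0 t : t < nv F -> reach w F t = 0%R -> reach w F s = 0%R.
Proof.
move=> Ht Hr.
have Hhas : has (fun v => reach w F v == 0%R) (iota 0 (nv F)).
  by apply/hasP; exists t; rewrite ?mem_iota ?Hr //.
by move: Hsel; rewrite /astar_select Hhas => -[].
Qed.

Local Open Scope ring_scope.

Lemma ext_canonical : canonical w0 F'.
Proof.
have [_ HCl [t0 Ht0 /andP [Ht0h /eqP Ht0r]] HR HM] := canon_info HC.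
have H0 : (0 < nv F)%N by case: HV.
have Hun := ext_u_lt.
have Hnu : forall v, (v < nv F)%N -> (v < nv F')%N by move=> v; rewrite Hnv; lia.
have Hrho0 : 0 <= rhoF w F.
  have [v Hv Hd] := height_att H0; apply: le_trans (rhoF_ge w Hv).
  by rewrite reachE Hd subnn subr0.
have Hrho' : rhoF w0 F' = Order.max (rhoF w F - 1) 0.
  apply/eqP; rewrite eq_le (UB_rho HV' Hun Hlu HR) /= ge_max.
  apply/andP; split.
    by rewrite -Ht0r -(ext_reach Ht0); apply: rhoF_ge; exact: Hnu.
  by have := rhoF_ge w0 Hun; rewrite ext_reach_u.
have [T1 [HT1 HT1h HT1r]] : exists T1,
    [/\ (T1 < nv F')%N, honest_vertex w0 F' T1 & reach w0 F' T1 = rhoF w0 F'].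
  case: (lerP 1 (rhoF w F)) => Hr1.
    exists t0; split; [exact: Hnu | by rewrite ext_honest |].
    by rewrite ext_reach // Ht0r Hrho' maxEle; case: ifP => //; lia.
  exists (nv F + m); split; [done | exact: ext_honest_u |].
  by rewrite ext_reach_u Hrho' maxEle; case: ifP => //; lia.
have Hall_rho : forall G, valid_fork w0 G -> closed w0 G -> rhoF w0 G <= rhoF w0 F'.
  move=> G HG _; have [uu Huu Hluu] := u_ex HG.
  by rewrite Hrho'; apply: (UB_rho HG Huu Hluu HR).
rewrite /canonical /w0 size_rcons /= -[(size w).+1](size_rcons w false) take_size.
split => //.
- exists F; split; last exact: ext_subfork.
  apply: (canon_take (w := w)); last exact: HC.
  by rewrite -cats1 take_size_cat // take_size.
- by exists T1.
- by split; first exists F'.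
move=> k; rewrite size_rcons ltnS leq_eqVlt => /orP [/eqP Ek|Hk].
  have Hdt0 : forall a, disjoint_over F' k a t0.
    move=> a; apply/(disjointP HV') => x _ Hx; rewrite (ext_path Ht0).1 in Hx.
    have Hxn := pu_lt Hwf Ht0 Hx.
    by rewrite Hlab' // Ek; apply: ext_lab_le.
  have Hmu : muF w0 k F' = rhoF w F - 1.
    apply/eqP; rewrite eq_le Ek (UB_mun HV' Hun Hlu HR) /=.
    have := muF_ge w0 (Hnu _ Ht0) (Hnu _ Ht0) (Hdt0 t0).
    by rewrite minxx ext_reach // Ht0r Ek.
  exists T1, t0; refine (conj HT1 (conj (Hnu _ Ht0) (conj HT1h (conj _ (conj (Hdt0 T1) (conj HT1r (conj _ _))))))).
  + by rewrite ext_honest.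
  + by rewrite ext_reach // Hmu Ht0r.
  + split; first by exists F'.
    move=> G HG _; have [uu Huu Hluu] := u_ex HG.
    by rewrite Hmu Ek; apply: (UB_mun HG Huu Hluu HR).
have [t1 [t2 [[H1 H2] /andP [Hh1 Hh2] Hd [Hr1 Hr2] HMk]]] := HM k Hk.
have Hmr : muF w k F <= rhoF w F by apply: muF_le_rho.
have Hub := UB_mu HV' Hun Hlu HR Hk HMk.
suff Hex : exists a b,
   [/\ (a < nv F')%N /\ (b < nv F')%N, honest_vertex w0 F' a && honest_vertex w0 F' b,
       disjoint_over F' k a b & reach w0 F' a = rhoF w0 F' /\ reach w0 F' b = Uk (rhoF w F) (muF w k F)].
  have [a [b [Ha Hab Hd' [Hra Hrb]]]] := Hex.
  have Hmu : muF w0 k F' = Uk (rhoF w F) (muF w k F).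
    apply/eqP; rewrite eq_le Hub /=.
    have := muF_ge w0 Ha.1 Ha.2 Hd'; rewrite Hra Hrb; apply: le_trans.
    rewrite le_min lexx andbT Hrho' /Uk le_max; apply/orP.
    by case: ifP => _; [right | left; rewrite lerD2r].
  case/andP: Hab => Ha1 Hb1.
  exists a, b; refine (conj Ha.1 (conj Ha.2 (conj Ha1 (conj Hb1 (conj Hd' (conj Hra (conj _ _))))))).
  + by rewrite Hmu.
  + split; first by exists F'.
    move=> G HG _; have [uu Huu Hluu] := u_ex HG.
    by rewrite Hmu; apply: (UB_mu HG Huu Hluu HR Hk HMk).
case: (lerP 1 (rhoF w F)) => Hr1'.
  case Es : ((muF w k F == 0) && (muF w k F < rhoF w F)).
    move/andP: Es => [/eqP Em _].
    have [_ [h [Hh Hhh Hhr Hhs]]] := ext_diverge Hk H1 H2 Hr1 (etrans Hr2 Em) Hd.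
    exists h, (nv F + m); split.
    + by split; [exact: Hnu|].
    + by rewrite ext_honest // Hhh ext_honest_u.
    + exact: ext_disj_u.
    + have Hpos : 0 < rhoF w F by lia.
      by rewrite ext_reach // Hhr ext_reach_u Hrho' /Uk Em eqxx Hpos /= maxEle; case: ifP; lia.
  exists t1, t2; split.
  + by split; exact: Hnu.
  + by rewrite !ext_honest // Hh1 Hh2.
  + by rewrite ext_disj.
  + by rewrite !ext_reach // Hr1 Hr2 Hrho' /Uk Es maxEle; case: ifP; lia.
have Er : rhoF w F = 0 by apply/eqP; rewrite eq_le Hrho0 andbT; lia.
have HUk : Uk (rhoF w F) (muF w k F) = muF w k F - 1.
  by rewrite /Uk Er; case: (muF w k F =P 0) => [->|]; rewrite ?ltxx ?andbF.
have Hrho'0 : rhoF w0 F' = 0 by rewrite Hrho' Er maxEle.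
rewrite HUk Hrho'0.
case: (muF w k F =P 0) => [Em|/eqP Hmn].
  have [_ [h [Hh Hhh Hhr Hhs]]] := ext_diverge Hk H1 H2 Hr1 (etrans Hr2 Em) Hd.
  exists (nv F + m), h; split.
  + by split; [|exact: Hnu].
  + by rewrite (ext_honest Hh) Hhh ext_honest_u.
  + apply: (disj_sym HV'); exact: ext_disj_u.
  + by rewrite (ext_reach Hh) Hhr ext_reach_u Er Em.
have Hmneg : muF w k F < 0 by rewrite lt_neqAle Hmn /=; rewrite -Er.
exists (nv F + m), t2; split.
- by split; [|exact: Hnu].
- by rewrite (ext_honest H2) Hh2 ext_honest_u.
- apply: (disj_sym HV'); apply: ext_disj_u => // x Hx2 Hxs.
  case: (leqP (lab F x) k) => // Hxk; exfalso.
  have Hts : disjoint_over F k t1 s.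
    apply/(disjointP HV) => y Hy1 Hys.
    case: (pu_chain Hwf Hs Hys Hxs) => Hyx.
      have Hy2 := pu_trans Hwf H2 Hx2 Hyx.
      by move/(disjointP HV): Hd; apply.
    have Hx1 := pu_trans Hwf H1 Hy1 Hyx.
    by move/(disjointP HV): Hd => /(_ x Hx1 Hx2); lia.
  have Hs0 := ext_sel0 H1 (etrans Hr1 Er).
  have := muF_ge w H1 Hs Hts; rewrite Hr1 Hs0 Er minxx; lia.
- by rewrite (ext_reach H2) Hr2 ext_reach_u.
Qed.

End Ext.

Theorem theorem5 (w : seq bool) (b : bool) (F F' : fork) :
  astar_run w F -> astar_step w F b F' ->
  canonical w F -> canonical (rcons w b) F'.
Proof.
move=> _; case: b => /= Hstep HC.
  rewrite Hstep; exact: case_true.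
case: Hstep => s [Hs Hsel [m [Hnv [Hlab' [Hpar' [Hps [Hpj [_ [Hlu [Hdu [HV' HC']]]]]]]]]]].
have [HV _ _ _ _] := canon_info HC.
exact: (ext_canonical HV Hs Hnv Hlab' Hpar' Hps Hpj Hlu Hdu HV' HC' HC Hsel).
Qed.
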